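(* Let $M$ be a measure-many quantum finite automaton that uses both a left and a right end-marker. Then there exists a measure-many quantum finite automaton $M'$ that uses only a right end-marker and is equivalent to $M$, i.e. for every $x\in\Sigma^*$ the probability that $M$ accepts $x$ equals the probability that $M'$ accepts $x$.
   Context: A measure-many QFA (MM-QFA) over $\Sigma$ with one (right) end-marker is a tuple $(Q,\Sigma,\{U_\sigma\}_{\sigma\in\Sigma\cup\{\$\}},q_0,Q_{acc},Q_{rej})$ with $Q$ finite indexing an orthonormal basis of $\mathbb{C}^Q$, end-marker $\$\notin\Sigma$, unitary $U_\sigma$, initial state $q_0$, and $Q$ partitioned into $Q_{acc},Q_{rej},Q_{non}$ with orthogonal projections $P_{acc},P_{rej},P_{non}$. On input $x$ it processes the symbols of $x\$$ maintaining $(\psi,p_{acc},p_{rej})$, initially $(|q_0\rangle,0,0)$; on reading $\sigma$: $\psi'=U_\sigma\psi$, $p_{acc}\mathrel{+}=\|P_{acc}\psi'\|^2$, $p_{rej}\mathrel{+}=\|P_{rej}\psi'\|^2$, $\psi\leftarrow P_{non}\psi'$; the acceptance probability is the final $p_{acc}$. An MM-QFA with both end-markers additionally has a unitary $U_{¢}$ for a left end-marker ${¢}\notin\Sigma\cup\{\$\}$ and processes ${¢}x\$$ in the same way (including the measurement after reading ${¢}$). *)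

(* Defs.v *)
From HB Require Import structures.
From mathcomp Require Import all_boot all_order all_algebra.
From mathcomp Require Import reals.
From mathcomp.real_closed Require Import complex.
Set Implicit Arguments. Unset Strict Implicit. Unset Printing Implicit Defensive.
Import Order.TTheory GRing.Theory Num.Theory.
Local Open Scope ring_scope.
Local Open Scope complex_scope.

Section QFA.
Variable R : realType.
Notation C := (R[i]).

Definition adjmx n (A : 'M[C]_n) : 'M[C]_n := \matrix_(i, j) (A j i)^*.
Definition unitary n (A : 'M[C]_n) : Prop := A *m adjmx A = 1%:M.

(* Basis states 'I_n; the sets Qacc, Qrej are disjoint and Qnon is the rest. *)

(* one measure-and-apply step: (psi, p_acc, p_rej) *)
Definition mm_step n (Qacc Qrej : {set 'I_n}) (U : 'M[C]_n)
    (st : 'cV[C]_n * C * C) : 'cV[C]_n * C * C :=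
  let psi' := U *m st.1.1 in
  (\col_i (if (i \notin Qacc) && (i \notin Qrej) then psi' i 0 else 0),
   st.1.2 + \sum_(i in Qacc) `|psi' i 0| ^+ 2,
   st.2 + \sum_(i in Qrej) `|psi' i 0| ^+ 2).

Definition init_state n (q0 : 'I_n) : 'cV[C]_n * C * C :=
  (delta_mx q0 0, 0, 0).

(* MM-QFA with only a right end-marker; the unitary for '$' is U None. *)
Record mmqfa1 (Sigma : finType) (n : nat) := MMQFA1 {
  U1 : option Sigma -> 'M[C]_n;
  q01 : 'I_n;
  acc1 : {set 'I_n};
  rej1 : {set 'I_n};
  disj1 : [disjoint acc1 & rej1];
  unit1 : forall s, unitary (U1 s)
}.

(* MM-QFA with both end-markers: U2 None = '$', Ucent = left end-marker. *)
Record mmqfa2 (Sigma : finType) (n : nat) := MMQFA2 {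
  U2 : option Sigma -> 'M[C]_n;
  Ucent : 'M[C]_n;
  q02 : 'I_n;
  acc2 : {set 'I_n};
  rej2 : {set 'I_n};
  disj2 : [disjoint acc2 & rej2];
  unit2 : forall s, unitary (U2 s);
  unitcent : unitary Ucent
}.

Definition accprob1 Sigma n (M : mmqfa1 Sigma n) (x : seq Sigma) : C :=
  (foldl (fun st s => mm_step (acc1 M) (rej1 M) (U1 M s) st)
         (init_state (q01 M)) (rcons (map Some x) None)).1.2.

(* acceptance probability on input x: process ¢x$ (measuring after ¢) *)
Definition accprob2 Sigma n (M : mmqfa2 Sigma n) (x : seq Sigma) : C :=
  (foldl (fun st s => mm_step (acc2 M) (rej2 M) (U2 M s) st)
         (mm_step (acc2 M) (rej2 M) (Ucent M) (init_state (q02 M)))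
         (rcons (map Some x) None)).1.2.

End QFA.

(* Main.v *)
Require Import Defs.
From mathcomp Require Import all_boot all_order all_algebra.
From mathcomp Require Import reals.
From mathcomp.real_closed Require Import complex.
From mathcomp Require Import fingroup perm ring.
Set Implicit Arguments. Unset Strict Implicit. Unset Printing Implicit Defensive.
Import Order.TTheory GRing.Theory Num.Theory.
Local Open Scope ring_scope.
Local Open Scope complex_scope.

Section Aux.
Variable R : realType.
Local Notation C := (R[i]).

Definition ad p q (A : 'M[C]_(p,q)) : 'M[C]_(q,p) := (map_mx conjc A)^T.

Lemma adjmxE k (A : 'M[C]_k) : adjmx A = ad A.
Proof. by apply/matrixP=> i j; rewrite !mxE. Qed.

Lemma ad_mul p q r (A : 'M[C]_(p,q)) (B : 'M[C]_(q,r)) : ad (A *m B) = ad B *m ad A.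
Proof. by rewrite /ad map_mxM trmx_mul. Qed.

Lemma adK p q (A : 'M[C]_(p,q)) : ad (ad A) = A.
Proof. by apply/matrixP=> i j; rewrite !mxE conjcK. Qed.

Lemma adB p q (A B : 'M[C]_(p,q)) : ad (A - B) = ad A - ad B.
Proof. by rewrite /ad map_mxB linearB. Qed.

Lemma ad1 k : ad (1%:M : 'M[C]_k) = 1%:M.
Proof. by rewrite /ad map_mx1 trmx1. Qed.

Lemma ad_block p1 p2 q1 q2 (A : 'M[C]_(p1,q1)) (B : 'M[C]_(p1,q2))
  (Cc : 'M[C]_(p2,q1)) (D : 'M[C]_(p2,q2)) :
  ad (block_mx A B Cc D) = block_mx (ad A) (ad Cc) (ad B) (ad D).
Proof. by rewrite /ad map_block_mx tr_block_mx. Qed.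

Lemma ad0 p q : ad (0 : 'M[C]_(p,q)) = 0.
Proof. by apply/matrixP=> i j; rewrite !mxE conjc0. Qed.

Lemma ad_perm k (s : 'S_k) : ad (perm_mx s : 'M[C]_k) = perm_mx s^-1.
Proof. by rewrite /ad map_perm_mx tr_perm_mx. Qed.

Definition k0 : 'I_5 := @Ordinal 5 0 isT.
Definition k1 : 'I_5 := @Ordinal 5 1 isT.
Definition k2 : 'I_5 := @Ordinal 5 2 isT.
Definition k3 : 'I_5 := @Ordinal 5 3 isT.
Definition k4 : 'I_5 := @Ordinal 5 4 isT.

Definition f5 (i : 'I_5) : 'I_5 :=
  match val i with 1 => k3 | 3 => k1 | 2 => k4 | 4 => k2 | _ => i end.

Lemma f5K : involutive f5.
Proof.
by case=> -[|[|[|[|[|?]]]]] Hi //=; apply/val_inj.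
Qed.

Definition s5 : 'S_5 := perm (inv_inj f5K).
Definition P5 : 'M[C]_5 := perm_mx s5.

Lemma P5_unit : P5 *m ad P5 = 1%:M.
Proof. by rewrite /P5 ad_perm -perm_mxM mulgV perm_mx1. Qed.

Lemma P5E (g : 'cV[C]_5) k : (P5 *m g) k 0 = g (f5 k) 0.
Proof. by rewrite /P5 -row_permE mxE permE. Qed.

Lemma index_case n (P : 'I_(n + 5) -> Prop) :
  (forall q, P (lshift 5 q)) -> (forall k, P (rshift n k)) -> forall i, P i.
Proof. by move=> Hl Hr i; rewrite -(splitK i); case: (split i). Qed.

Lemma split_l n q : split (lshift 5 q : 'I_(n + 5)) = inl q.
Proof. exact: (unsplitK (inl _ q)). Qed.
Lemma split_r n k : split (rshift n k : 'I_(n + 5)) = inr k.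
Proof. exact: (unsplitK (inr _ k)). Qed.


Lemma sum5 (F : 'I_5 -> C) : \sum_(k < 5) F k = F k0 + F k1 + F k2 + F k3 + F k4.
Proof.
rewrite !big_ord_recr big_ord0 /= add0r.
by congr (_ + _ + _ + _ + _); congr F; apply/val_inj.
Qed.

Lemma test : (k0 == k1) = false /\ f5 k3 = k1.
Proof. split; by []. Qed.

Lemma sqr_norm_ge0 (x : C) : 0 <= `|x| ^+ 2.
Proof. by rewrite exprn_ge0. Qed.

Lemma norm_sqrtc (x : C) : 0 <= x -> `|sqrtc x| ^+ 2 = x.
Proof. by move=> x0; rewrite ger0_norm ?sqrtc_ge0 // sqr_sqrtc. Qed.

End Aux.

Section Constr.
Variable R : realType.
Local Notation C := (R[i]).
Variables (Sigma : finType) (n : nat) (M : mmqfa2 R Sigma n).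

Local Notation Qa := (acc2 M).
Local Notation Qr := (rej2 M).
Local Notation m := (n + 5)%N.

Definition acc' : {set 'I_m} :=
  [set i | match split i with inl q => q \in Qa | inr k => k == k3 end].
Definition rej' : {set 'I_m} :=
  [set i | match split i with inl q => q \in Qr | inr k => k == k4 end].

Lemma disj' : [disjoint acc' & rej'].
Proof.
apply/pred0P => i /=; rewrite !inE; case: split => [q|k].
  by case: (boolP (q \in Qa)) => // /(disjointFr (disj2 M)) ->.
by case: eqP => // ->.
Qed.

Definition st1 := mm_step Qa Qr (Ucent M) (init_state R (q02 M)).
Definition psi1 := st1.1.1.
Definition pa1 := st1.1.2.
Definition pr1 := st1.2.
Definition g5 : 'cV[C]_5 :=
  \col_k (if k == k1 then sqrtc pa1 else if k == k2 then sqrtc pr1 else 0).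
Definition psi : 'cV[C]_m := col_mx psi1 g5.
Definition s0 : 'I_m := rshift n k0.
Definition u : 'cV[C]_m := delta_mx s0 0 - psi.
Definition W : 'M[C]_m := 1%:M - u *m ad u.
Definition V0 s : 'M[C]_m := block_mx (U2 M s) 0 0 (P5 R).
Definition V s : 'M[C]_m := W *m V0 s *m W.

Definition halt' (i : 'I_m) := ~~ ((i \notin acc') && (i \notin rej')).

Lemma mem_l (A : {set 'I_n}) k q :
  (lshift 5 q \in [set i : 'I_m | match split i with inl q => q \in A | inr k' => k' == k end]) = (q \in A).
Proof. by rewrite inE split_l. Qed.
Lemma mem_r (A : {set 'I_n}) k k' :
  (rshift n k' \in [set i : 'I_m | match split i with inl q => q \in A | inr k' => k' == k end]) = (k' == k).
Proof. by rewrite inE split_r. Qed.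

Lemma pa1_ge0 : 0 <= pa1.
Proof. by rewrite /pa1 /= add0r sumr_ge0 // => i _; rewrite sqr_norm_ge0. Qed.
Lemma pr1_ge0 : 0 <= pr1.
Proof. by rewrite /pr1 /= add0r sumr_ge0 // => i _; rewrite sqr_norm_ge0. Qed.

Lemma u_halt i : halt' i -> u i 0 = 0.
Proof.
rewrite /halt' /acc' /rej'.
elim/index_case: i => [q|k].
  rewrite !mem_l /u !mxE split_l /psi1 /st1 /= !mxE.
  rewrite (negbTE (_ : lshift 5 q != s0)) /=; last first.
    by apply/eqP => /(congr1 (@split _ _)); rewrite split_l split_r.
  by move/negbTE => ->; rewrite subrr.
rewrite !mem_r /u !mxE split_r !mxE /s0 (inj_eq (@rshift_inj _ _)).
by case: k => -[|[|[|[|[|?]]]]] Hk //=; rewrite subrr.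
Qed.


Definition x0 : 'cV[C]_n := Ucent M *m delta_mx (q02 M) 0.

Lemma normU : \sum_i `|x0 i 0| ^+ 2 = 1.
Proof.
have H := mulmx1C (unitcent M); rewrite adjmxE in H.
have := congr1 (fun A : 'M_n => A (q02 M) (q02 M)) H; rewrite /= !mxE eqxx /= => H1; apply: (eq_trans _ H1).
apply: eq_bigr => i _; rewrite /x0 -colE !mxE sqr_normc mulrC.
by [].
Qed.

Lemma norm_split :
  \sum_i `|x0 i 0| ^+ 2 = \sum_(i in Qa) `|x0 i 0| ^+ 2 + \sum_(i in Qr) `|x0 i 0| ^+ 2
    + \sum_i `|psi1 i 0| ^+ 2.
Proof.
rewrite [in RHS]big_mkcond [X in _ + X + _]big_mkcond -!big_split /=.
apply: eq_bigr => i _; rewrite /psi1 /st1 /= mxE -/x0.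
case: (boolP (i \in Qa)) => ia /=.
  by rewrite (disjointFr (disj2 M) ia) /= normr0 expr0n /= !addr0.
case: (boolP (i \in Qr)) => ir /=; first by rewrite normr0 expr0n /= add0r addr0.
by rewrite !add0r.
Qed.

Lemma norm_psi : \sum_i `|psi1 i 0| ^+ 2 + pa1 + pr1 = 1.
Proof.
rewrite -normU norm_split /pa1 /pr1 /st1 /= !add0r -/x0.
by rewrite -addrA addrC.
Qed.


Lemma subE p q (A B : 'M[C]_(p,q)) i j : (A - B) i j = A i j - B i j.
Proof. by rewrite !mxE. Qed.

Lemma u_l q : u (lshift 5 q) 0 = - psi1 q 0.
Proof.
rewrite /u subE col_mxEu mxE (negbTE (_ : lshift 5 q != s0)) ?sub0r //.
by apply/eqP => /(congr1 (@split _ _)); rewrite split_l split_r.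
Qed.

Lemma u_r k : u (rshift n k) 0 = (k == k0)%:R - g5 k 0.
Proof. by rewrite /u subE col_mxEd mxE /s0 (inj_eq (@rshift_inj _ _)) andbT. Qed.

Lemma uu : ad u *m u = 2%:M.
Proof.
apply/matrixP => i j; rewrite !ord1 !mxE /=.
transitivity (\sum_k `|u k 0| ^+ 2).
  by apply: eq_bigr => k _; rewrite !mxE sqr_normc mulrC.
rewrite big_split_ord /= sum5.
have -> : \sum_(q < n) `|u (lshift 5 q) 0| ^+ 2 = \sum_q `|psi1 q 0| ^+ 2.
  by apply: eq_bigr => q _; rewrite u_l normrN.
rewrite !u_r !mxE /=.
rewrite !subr0 !sub0r !normrN !norm_sqrtc ?pa1_ge0 ?pr1_ge0 // normr0 normr1.
rewrite expr1n expr0n /= !addr0.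
have H := norm_psi; move: H; move: (\sum__ _) => S H.
have H' : pa1 + pr1 = 1 - S by rewrite -H; ring.
rewrite -addrA H'; ring.
Qed.


Lemma adE p q (A : 'M[C]_(p,q)) i j : ad A i j = (A j i)^*.
Proof. by rewrite !mxE. Qed.

Lemma Wz p (z : 'M[C]_(m,p)) : W *m z = z - u *m (ad u *m z).
Proof. by rewrite /W mulmxBl mul1mx mulmxA. Qed.

Lemma WW : W *m W = 1%:M.
Proof.
rewrite Wz /W mulmxBr mulmx1 !mulmxA uu mul_scalar_mx mulmxBr.
rewrite -scalemxAr scaler_nat mulr2n.
by rewrite opprB addrK subrK.
Qed.

Lemma adW : ad W = W.
Proof. by rewrite /W adB ad1 ad_mul adK. Qed.

Lemma We0 : W *m delta_mx s0 0 = psi.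
Proof.
rewrite Wz.
have -> : ad u *m delta_mx s0 0 = 1%:M.
  apply/matrixP => i j; rewrite !ord1 mxE (bigD1 s0) //= big1 ?addr0.
    rewrite adE u_r [g5 _ _]mxE (_ : k0 == k1 = false) // (_ : k0 == k2 = false) //.
    by rewrite eqxx subr0 conjc1 [delta_mx _ _ _ _]mxE [1%:M _ _]mxE !eqxx mulr1.
  by move=> k /negbTE nk; rewrite [delta_mx _ _ _ _]mxE nk mulr0.
by rewrite mulmx1 /u opprB addrC subrK.
Qed.

Lemma W_halt p (z : 'M[C]_(m,p)) i j : halt' i -> (W *m z) i j = z i j.
Proof.
move=> hi; rewrite Wz subE mxE big_ord1 u_halt // mul0r subr0.
by [].
Qed.


Definition maskm (z : 'cV[C]_m) : 'cV[C]_m :=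
  \col_i (if (i \notin acc') && (i \notin rej') then z i 0 else 0).
Definition maskn (y : 'cV[C]_n) : 'cV[C]_n :=
  \col_i (if (i \notin Qa) && (i \notin Qr) then y i 0 else 0).
Definition mask5 (w : 'cV[C]_5) : 'cV[C]_5 :=
  \col_k (if (k != k3) && (k != k4) then w k 0 else 0).

Lemma adu_mask (z : 'cV[C]_m) : ad u *m maskm z = ad u *m z.
Proof.
apply/matrixP => i j; rewrite (ord1 i) (ord1 j) [LHS]mxE [RHS]mxE; apply: eq_bigr => k _.
rewrite [maskm _ _ _]mxE; case: ifP => // hk; rewrite adE u_halt ?conjc0 ?mul0r //.
by rewrite /halt' hk.
Qed.

Lemma W_mask (z : 'cV[C]_m) : maskm (W *m z) = W *m maskm z.
Proof.
apply/matrixP => i j; rewrite (ord1 j) [W *m maskm z]Wz adu_mask.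
rewrite subE [(u *m _) i 0]mxE big_ord1 [maskm _ _ _]mxE [maskm _ _ _]mxE [W *m z]Wz.
case: ifP => hi; first by rewrite subE [(u *m _) i 0]mxE big_ord1.
by rewrite u_halt ?mul0r ?subr0 // /halt' hi.
Qed.

Lemma mask_col y w : maskm (col_mx y w) = col_mx (maskn y) (mask5 w).
Proof.
apply/matrixP => i j; rewrite ord1.
elim/index_case: i => [q|k].
  by rewrite col_mxEu !mxE /acc' /rej' !mem_l split_l.
by rewrite col_mxEd !mxE /acc' /rej' !mem_r split_r.
Qed.

Lemma sum_halt (A : {set 'I_m}) (z : 'cV[C]_m) :
  (forall i, i \in A -> halt' i) ->
  \sum_(i in A) `|(W *m z) i 0| ^+ 2 = \sum_(i in A) `|z i 0| ^+ 2.
Proof. by move=> hA; apply: eq_bigr => i /hA hi; rewrite W_halt. Qed.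

Lemma sum_colm (A : {set 'I_n}) kk y w :
  \sum_(i in [set i : 'I_m | match split i with inl q => q \in A | inr k => k == kk end])
     `|(col_mx y w : 'cV[C]_m) i 0| ^+ 2
  = \sum_(i in A) `|y i 0| ^+ 2 + `|w kk 0| ^+ 2.
Proof.
rewrite big_mkcond big_split_ord /=; congr (_ + _).
  by rewrite [RHS]big_mkcond; apply: eq_bigr => q _; rewrite mem_l col_mxEu.
rewrite (bigD1 kk) //= mem_r eqxx col_mxEd big1 ?addr0 // => k /negbTE nk.
by rewrite mem_r nk.
Qed.

Lemma acc_halt i : i \in acc' -> halt' i.
Proof. by rewrite /halt' => ->. Qed.
Lemma rej_halt i : i \in rej' -> halt' i.
Proof. by rewrite /halt' => ->; rewrite andbF. Qed.

Lemma mstep s st (y : 'cV[C]_n) (w : 'cV[C]_5) :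
  V s *m st.1.1 = W *m col_mx y w ->
  mm_step acc' rej' (V s) st =
   (W *m col_mx (maskn y) (mask5 w),
    st.1.2 + (\sum_(i in Qa) `|y i 0| ^+ 2 + `|w k3 0| ^+ 2),
    st.2 + (\sum_(i in Qr) `|y i 0| ^+ 2 + `|w k4 0| ^+ 2)).
Proof.
move=> H; rewrite /mm_step /= H; congr (_, _, _).
- by rewrite -mask_col -W_mask.
- by rewrite sum_halt ?sum_colm //; exact: acc_halt.
- by rewrite sum_halt ?sum_colm //; exact: rej_halt.
Qed.


Lemma V0col s (y : 'cV[C]_n) (w : 'cV[C]_5) : V0 s *m col_mx y w = col_mx (U2 M s *m y) (P5 R *m w).
Proof. by rewrite /V0 mul_block_col !mul0mx addr0 add0r. Qed.

Lemma Vstep s (y : 'cV[C]_n) : V s *m (W *m col_mx y 0) = W *m col_mx (U2 M s *m y) 0.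
Proof. by rewrite /V -!mulmxA (mulmxA W W) WW mul1mx V0col mulmx0. Qed.

Lemma Vfirst s : V s *m delta_mx s0 0 = W *m col_mx (U2 M s *m psi1) (P5 R *m g5).
Proof. by rewrite /V -!mulmxA We0 /psi V0col. Qed.

Lemma V0unit s : V0 s *m ad (V0 s) = 1%:M.
Proof.
rewrite /V0 ad_block !ad0 mulmx_block !mulmx0 !mul0mx !addr0 !add0r.
by rewrite -adjmxE (unit2 M s) P5_unit -scalar_mx_block.
Qed.

Lemma Vunit s : unitary (V s).
Proof.
rewrite /unitary adjmxE /V !ad_mul adW !mulmxA -(mulmxA _ W W) WW mulmx1.
by rewrite -(mulmxA W (V0 s)) V0unit mulmx1 WW.
Qed.

Lemma mask50 : mask5 0 = 0.
Proof. by apply/matrixP => i j; rewrite !mxE; case: ifP. Qed.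

Lemma fold_rel l st :
  foldl (fun st s => mm_step acc' rej' (V s) st) (W *m col_mx st.1.1 0, st.1.2, st.2) l =
  let st' := foldl (fun st s => mm_step Qa Qr (U2 M s) st) st l in
  (W *m col_mx st'.1.1 0, st'.1.2, st'.2).
Proof.
elim: l st => [|s l IH] st //=.
set st2 := mm_step Qa Qr (U2 M s) st.
rewrite (_ : mm_step acc' rej' (V s) _ = (W *m col_mx st2.1.1 0, st2.1.2, st2.2)); first exact: IH.
rewrite (@mstep s _ (U2 M s *m st.1.1) 0) /=; last by rewrite Vstep.
by rewrite mask50 !mxE normr0 expr0n /= !addr0.
Qed.

Lemma first_step c :
  mm_step acc' rej' (V c) (init_state R s0) =
  let st' := mm_step Qa Qr (U2 M c) st1 in (W *m col_mx st'.1.1 0, st'.1.2, st'.2).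
Proof.
rewrite (@mstep c _ (U2 M c *m psi1) (P5 R *m g5)); last by rewrite Vfirst.
have -> : mask5 (P5 R *m g5) = 0.
  apply/matrixP => i j; rewrite ord1 /mask5 mxE P5E [g5 _ _]mxE [(0 : 'cV[C]_5) i 0]mxE.
  by case: i => -[|[|[|[|[|?]]]]] Hi.
have f3 : f5 k3 = k1 by [].
have f4 : f5 k4 = k2 by [].
rewrite !P5E f3 f4.
have -> : `|g5 k1 0| ^+ 2 = pa1.
  by rewrite mxE eqxx norm_sqrtc // pa1_ge0.
have -> : `|g5 k2 0| ^+ 2 = pr1.
  by rewrite mxE (_ : k2 == k1 = false) // eqxx norm_sqrtc // pr1_ge0.
rewrite [(init_state R s0).1.2]/= [(init_state R s0).2]/= !add0r.
rewrite [_ + pa1]addrC [_ + pr1]addrC.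
reflexivity.
Qed.

End Constr.

Theorem theoremA2 (R : realType) (Sigma : finType) (n : nat)
    (M : mmqfa2 R Sigma n) :
  exists (m : nat) (M' : mmqfa1 R Sigma m),
    forall x : seq Sigma, accprob1 M' x = accprob2 M x.
Proof.
exists (n + 5)%N, (MMQFA1 (s0 n) (disj' M) (Vunit M)) => x.
rewrite /accprob1 /accprob2 /=.
case E: (rcons _ _) => [|c l]; first by move: E; case: (map _ _).
rewrite /= (first_step M c) fold_rel.
reflexivity.
Qed.
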